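(* Consider $N$ advertisers with click-through rates $c_i\in(0,1]$, abandonment probabilities $\gamma_i\ge0$, $\mu_i=c_i+\gamma_i\le 1$, and private values per click $v_i\ge0$, indexed so that $\frac{c_1v_1}{\mu_1}\ge\dots\ge\frac{c_Nv_N}{\mu_N}$. Let $b_{N+1}=0$ and $b_i=\frac{\mu_i}{c_i}\big[v_ic_i+(1-\mu_i)\frac{b_{i+1}c_{i+1}}{\mu_{i+1}}\big]$ for $i=N,\dots,1$. Then the search engine's expected revenue under the CE mechanism with bids $(b_1,\dots,b_N)$ equals its expected revenue under the VCG mechanism with truthful bids $b_i=v_i$ for all $i$.
   Context: Click model: users view ads top to bottom; having viewed the ad at position $k$ the user clicks it with probability $c$ of that ad, abandons with probability $\gamma$ of that ad, and otherwise moves on; so the ad at position $k$ in order $(1),\dots,(N)$ is clicked with probability $c_{(k)}\prod_{l<k}(1-\mu_{(l)})$. Search engine expected revenue is $\sum_k p_{(k)}c_{(k)}\prod_{l<k}(1-\mu_{(l)})$. CE mechanism: with $w=c/\mu$, ads are ranked in descending order of $wb$ and the ad at position $i$ pays per click $\frac{b_{i+1}c_{i+1}\mu_i}{\mu_{i+1}c_i}$, where $i+1$ is the ad immediately below (bottom ad pays $0$). VCG mechanism: ads are ranked in descending order of $\frac{b c}{\mu}$ and the ad at position $i$ pays per click $\frac{\mu_i}{c_i}\sum_{j=i+1}^{N}b_jc_j\prod_{k=i+1}^{j-1}(1-\mu_k)$ (indices referring to positions). *)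

(* Defs.v *)
(* positions/advertisers indexed 0..N-1 (paper's 1..N). *)
From mathcomp Require Import all_boot all_order all_algebra.
Set Implicit Arguments. Unset Strict Implicit. Unset Printing Implicit Defensive.
Import Order.TTheory GRing.Theory Num.Theory.
Local Open Scope ring_scope.

Section Ads.
Variable R : realFieldType.
Variable N : nat.
Variables (c g : nat -> R).

Definition mu (i : nat) : R := c i + g i.
Definition w (i : nat) : R := c i / mu i.

Definition click_prob (k : nat) : R := c k * \prod_(l < k) (1 - mu l).

(* Search engine expected revenue, given per-click prices p (ads in index order). *)
Definition revenue (p : nat -> R) : R := \sum_(k < N) p k * click_prob k.

Definition ce_price (b : nat -> R) (i : nat) : R :=
  if (i.+1 < N)%N then b i.+1 * c i.+1 * mu i / (mu i.+1 * c i) else 0.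

Definition vcg_price (b : nat -> R) (i : nat) : R :=
  mu i / c i * \sum_(i.+1 <= j < N)
      b j * c j * \prod_(i.+1 <= k < j) (1 - mu k).

(* The bids b_i of the theorem: b_N = 0 (paper's b_{N+1}) and
   b_i = mu_i/c_i * (v_i c_i + (1-mu_i) b_{i+1} c_{i+1}/mu_{i+1}). *)
Fixpoint ce_bid_aux (v : nat -> R) (n i : nat) : R :=
  match n with
  | 0 => 0
  | n'.+1 => mu i / c i *
      (v i * c i + (1 - mu i) * (ce_bid_aux v n' i.+1 * c i.+1 / mu i.+1))
  end.

Definition ce_bid (v : nat -> R) (i : nat) : R := ce_bid_aux v (N - i) i.

End Ads.

(* Main.v *)
Require Import Defs.
From mathcomp Require Import all_boot all_order all_algebra.
From mathcomp Require Import zify ring lra.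
Set Implicit Arguments. Unset Strict Implicit.
Import Order.TTheory GRing.Theory Num.Theory.
Local Open Scope ring_scope.

Section Aux.
Variable R : realFieldType.
Variable N : nat.
Variables (c g v : nat -> R).
Hypothesis hc : forall i, (i < N)%N -> 0 < c i /\ c i <= 1.
Hypothesis hg : forall i, (i < N)%N -> 0 <= g i.
Hypothesis hmu : forall i, (i < N)%N -> mu c g i <= 1.
Hypothesis hv : forall i, (i < N)%N -> 0 <= v i.
Hypothesis hord : forall i, (i.+1 < N)%N ->
     c i.+1 * v i.+1 / mu c g i.+1 <= c i * v i / mu c g i.

Let b := ce_bid N c g v.
Let Bv i := b i * c i / mu c g i.
Let S i := \sum_(i <= j < N) v j * c j * \prod_(i <= k < j) (1 - mu c g k).
Let r i := c i * v i / mu c g i.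

Lemma cpos i : (i < N)%N -> 0 < c i. Proof. by move=> h; case: (hc h). Qed.
Lemma mupos i : (i < N)%N -> 0 < mu c g i.
Proof. move=> h; rewrite /mu; have := cpos h; have := hg h; lra. Qed.

Lemma bid_step i : (i < N)%N -> b i = mu c g i / c i *
   (v i * c i + (1 - mu c g i) * (b i.+1 * c i.+1 / mu c g i.+1)).
Proof.
move=> h; rewrite /b /ce_bid.
have -> : (N - i = (N - i.+1).+1)%N by lia.
by [].
Qed.

Lemma B_rec i : (i < N)%N -> Bv i = v i * c i + (1 - mu c g i) * Bv i.+1.
Proof.
move=> h; rewrite /Bv bid_step //.
have c0 := cpos h; have m0 := mupos h.
set X := b i.+1 * _ / _; field; by rewrite !gt_eqF.
Qed.

Lemma B_N : Bv N = 0.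
Proof. by rewrite /Bv /b /ce_bid subnn /= !mul0r. Qed.

Lemma B_S n i : (i + n = N)%N -> Bv i = S i.
Proof.
elim: n i => [|n IH] i hi.
  rewrite addn0 in hi; subst i; rewrite B_N /S big_geq //.
have hiN : (i < N)%N by lia.
rewrite B_rec // IH; last by lia.
rewrite /S (big_ltn hiN) big_geq // mulr1; congr (_ + _).
rewrite big_distrr /=; apply: eq_big_nat => j /andP[hij _].
rewrite (big_ltn hij); ring.
Qed.

Lemma B_le n i : (i + n.+1 = N)%N -> Bv i <= r i.
Proof.
elim: n i => [|n IH] i hi.
  have hiN : (i < N)%N by lia.
  have e1 : i.+1 = N by lia.
  rewrite B_rec // e1 B_N mulr0 addr0 /r.
  have m0 := mupos hiN; have m1 := hmu hiN.
  have h0 : 0 <= c i * v i by apply: mulr_ge0; [apply: ltW; apply: cpos|apply: hv].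
  rewrite ler_pdivlMr // mulrC [v i * _]mulrC.
  by rewrite ler_piMl.
have hiN : (i.+1 < N)%N by lia.
have hi0 : (i < N)%N by lia.
rewrite B_rec //.
have h1 := IH i.+1 ltac:(lia).
have h2 := hord hiN.
have m0 := mupos hi0; have m1 := hmu hi0.
have e : mu c g i * r i = v i * c i.
  rewrite /r; field; rewrite gt_eqF //.
have h3 : (1 - mu c g i) * Bv i.+1 <= (1 - mu c g i) * r i.
  apply: ler_wpM2l; first lra.
  by apply: le_trans h1 h2.
lra.
Qed.

End Aux.

Theorem theorem5 (R : realFieldType) (N : nat) (c g v : nat -> R)
  (hc : forall i, (i < N)%N -> 0 < c i /\ c i <= 1)
  (hg : forall i, (i < N)%N -> 0 <= g i)
  (hmu : forall i, (i < N)%N -> mu c g i <= 1)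
  (hv : forall i, (i < N)%N -> 0 <= v i)
  (hord : forall i, (i.+1 < N)%N ->
     c i.+1 * v i.+1 / mu c g i.+1 <= c i * v i / mu c g i) :
  let b := ce_bid N c g v in
  (* the index order is a CE ranking: descending in w * b *)
  (forall i, (i.+1 < N)%N -> w c g i.+1 * b i.+1 <= w c g i * b i) /\
  revenue N c g (ce_price N c g b) = revenue N c g (vcg_price N c g v).
Proof.
move=> b; split.
  move=> i hiN.
  have hi0 : (i < N)%N by lia.
  have E : forall k, w c g k * b k = b k * c k / mu c g k.
    by move=> k; rewrite /w; ring.
  rewrite !E.
  rewrite (B_rec v hc hg hi0).
  have h1 := B_le hc hg hmu hv hord (n := (N - i.+2)%N) (i := i.+1) ltac:(lia).
  have h2 := hord _ hiN.
  have m0 := mupos hc hg hi0; have m1 := hmu _ hi0.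
  set X := ce_bid N c g v i.+1 * c i.+1 / mu c g i.+1 in h1 *.
  have e : mu c g i * (c i * v i / mu c g i) = v i * c i.
    field; rewrite gt_eqF //.
  have h3 : mu c g i * X <= mu c g i * (c i * v i / mu c g i).
    apply: ler_wpM2l; first lra.
    by apply: le_trans h1 h2.
  lra.
rewrite /revenue; apply: eq_bigr => k _; congr (_ * _).
rewrite /ce_price /vcg_price.
case: ifP => hk.
  have hk0 : (k < N)%N by lia.
  rewrite -(B_S v hc hg (n := (N - k.+1)%N) (i := k.+1)); last by lia.
  have c0 := cpos hc hk0; have m0 := mupos hc hg hk0.
  have c1 := cpos hc hk; have m1 := mupos hc hg hk.
  rewrite /b; field.
  by rewrite !gt_eqF.
rewrite big_geq; last by lia.
by rewrite mulr0.
Qed.
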